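(* Let $x=\prod_{n\ge1}01^n=0\,1\,0\,11\,0\,111\,0\,1111\cdots\in\{0,1\}^\omega$, and define $\varphi:\{0,1\}^+\to\{0,1\}$ by $\varphi(u)=0$ if $u\in\mathrm{Fact}(x)$ and $\varphi(u)=1$ otherwise. Then no suffix of $x$ admits a $\varphi$-ultra monochromatic factorization.
   Context: $\mathrm{Fact}(x)$ is the set of non-empty finite factors of $x$. A factorization $x'=V_0V_1V_2\cdots$ with all $V_i$ non-empty is $\varphi$-ultra monochromatic if there is a color $c$ such that for all $k\ge1$, all $0\le n_1<\cdots<n_k$ and all permutations $\sigma$ of $\{1,\dots,k\}$, $\varphi(V_{n_{\sigma(1)}}\cdots V_{n_{\sigma(k)}})=c$. *)

(* Defs.v *)
From Stdlib Require Import ClassicalEpsilon.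
From mathcomp Require Import all_boot all_fingroup.
Set Implicit Arguments. Unset Strict Implicit. Unset Printing Implicit Defensive.

(* Letters: false = 0, true = 1.  Infinite words are nat -> bool. *)

(* x = prod_{n>=1} 0 1^n; the first p+1 blocks have length >= p+1. *)
Definition xword (p : nat) : bool :=
  nth true (flatten [seq false :: nseq n true | n <- iota 1 p.+1]) p.

Definition subword (w : nat -> bool) (i l : nat) : seq bool :=
  [seq w (i + k) | k <- iota 0 l].

Definition inFact (w : nat -> bool) (u : seq bool) : Prop :=
  size u > 0 /\ exists i, u = subword w i (size u).

Definition phi (u : seq bool) : bool :=
  if excluded_middle_informative (inFact xword u) then false else true.

Definition wsuffix (w : nat -> bool) (m : nat) : nat -> bool := fun n => w (m + n).

Definition factorization (w : nat -> bool) (V : nat -> seq bool) : Prop :=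
  (forall i, size (V i) > 0) /\
  (forall i, V i = subword w (\sum_(j < i) size (V j)) (size (V i))).

Definition ultra_mono (col : seq bool -> bool) (V : nat -> seq bool) : Prop :=
  exists c : bool, forall (k : nat) (n : 'I_k -> nat) (s : 'S_k),
    0 < k ->
    (forall i j : 'I_k, i < j -> n i < n j) ->
    col (flatten [seq V (n (s i)) | i <- enum 'I_k]) = c.

(* Main.v *)
Require Import Defs.
From Stdlib Require Import ClassicalEpsilon.
From mathcomp Require Import all_boot all_fingroup zify.
Set Implicit Arguments. Unset Strict Implicit.

Definition F N := flatten [seq false :: nseq n true | n <- iota 1 N].

Lemma F_S N : F N.+1 = F N ++ false :: nseq N.+1 true.
Proof. rewrite /F -[N.+1]addn1 iotaD map_cat flatten_cat /= cats0 add0n addn1 //. Qed.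

Lemma size_F N : (size (F N)) * 2 = N * (N + 3).
Proof.
elim: N => [//|N IH]; rewrite F_S size_cat /= size_nseq. nia.
Qed.

Lemma Fchar N p : p < size (F N) ->
  (nth true (F N) p = false <-> exists k, k < N /\ p * 2 = k * (k + 3)).
Proof.
elim: N p => [|N IH] p; first by [].
have HS := size_F N.
rewrite F_S nth_cat size_cat /= size_nseq => Hp.
case: ltnP => H.
  rewrite IH //; split=> [[k [Hk Hk2]]|[k [Hk Hk2]]]; exists k; split => //; first lia.
  have : k != N by apply/eqP => E; subst k; nia.
  lia.
case E: (p - size (F N)) => [|r] /=.
  split=> // _; exists N; split => //; lia.
have -> : nth true (true :: nseq N true) r = true.
  by case: (r) => //= r'; rewrite nth_nseq; case: ifP.
split => // [[k [Hk Hk2]]].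
have : k * (k + 3) <= N * (N + 3) by apply: leq_mul; lia.
  lia.
Qed.

Lemma x0 p : xword p = false <-> exists k, p * 2 = k * (k + 3).
Proof.
have Hs : p < size (F p.+1) by have := size_F p.+1; nia.
rewrite /xword -/(F p.+1) (Fchar Hs); split => [[k [_ H]]|[k H]]; exists k => //.
split => //; nia.
Qed.

Lemma mono3 k k' : k <= k' -> k * (k + 3) <= k' * (k' + 3).
Proof. move=> h; apply: leq_mul; lia. Qed.

Lemma step p k : p * 2 = k * (k + 3) -> forall q, p < q -> xword q = false ->
  (forall r, p < r < q -> xword r = true) -> q = p + k + 2.
Proof.
move=> Hp q Hpq /x0 [m Hm] Hb.
have Hkm : k < m.
  rewrite ltnNge; apply/negP => /mono3; lia.
have Hq1 : p + k + 2 <= q by have := mono3 Hkm; nia.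
apply/eqP; rewrite eqn_leq Hq1 andbT leqNgt; apply/negP => Hlt.
have : xword (p + k + 2) = false by apply/x0; exists k.+1; nia.
rewrite Hb //; lia.
Qed.

Lemma xgap p q p' q' : p < q -> q <= p' -> p' < q' ->
  xword p = false -> xword q = false -> xword p' = false -> xword q' = false ->
  (forall r, p < r < q -> xword r = true) ->
  (forall r, p' < r < q' -> xword r = true) -> q - p < q' - p'.
Proof.
move=> h1 h2 h3 /x0 [k Hk] Hq /x0 [k' Hk'] Hq' B1 B2.
have e1 := step Hk h1 Hq B1.
have e2 := step Hk' h3 Hq' B2.
have : k < k' by rewrite ltnNge; apply/negP => /mono3; lia.
lia.
Qed.

Lemma phi_false u : phi u = false -> inFact xword u.
Proof. by rewrite /phi; case: excluded_middle_informative. Qed.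

Lemma fact_nth u : inFact xword u -> exists i, forall r, r < size u -> nth true u r = xword (i + r).
Proof.
move=> [_ [i Hi]]; exists i => r Hr; rewrite Hi /subword (nth_map 0); last by rewrite size_iota.
by rewrite nth_iota.
Qed.

Definition sA (A : seq bool) := index false A.
Definition tA (A : seq bool) := index false (rev A).

Lemma sA_lt (A : seq bool) : false \in A -> sA A < size A.
Proof. by rewrite /sA index_mem. Qed.
Lemma sA_nth (A : seq bool) : false \in A -> nth true A (sA A) = false.
Proof. by move=> h; rewrite /sA nth_index. Qed.
Lemma sA_before (A : seq bool) r : r < sA A -> nth true A r = true.
Proof.
move=> h; have := before_find true h.
by case: (nth true A r).
Qed.
Lemma tA_lt (A : seq bool) : false \in A -> tA A < size A.
Proof. by move=> h; rewrite /tA -(size_rev A) index_mem mem_rev. Qed.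
Lemma tA_nth (A : seq bool) : false \in A -> nth true A (size A - (tA A).+1) = false.
Proof. move=> h; rewrite -nth_rev ?tA_lt // /tA nth_index // mem_rev //. Qed.
Lemma tA_after (A : seq bool) r : size A - (tA A).+1 < r < size A -> nth true A r = true.
Proof.
move=> /andP [h1 h2].
have e : r = size A - (size A - r.+1).+1 by lia.
rewrite e -nth_rev; last lia.
apply: sA_before; rewrite /sA -/(tA A). lia.
Qed.
Lemma sA_le_last (A : seq bool) : false \in A -> sA A <= size A - (tA A).+1.
Proof.
move=> h; rewrite leqNgt; apply/negP => H.
by have := sA_before H; rewrite tA_nth.
Qed.

Definition gap A B := tA A + sA B.

Lemma junction (A B C : seq bool) : false \in A -> false \in B -> false \in C ->
  inFact xword (A ++ B ++ C) -> gap A B < gap B C.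
Proof.
move=> hA hB hC /fact_nth [i Hi].
have nA := tA_lt hA; have nB := tA_lt hB; have nC := sA_lt hC.
have nB' := sA_lt hB; have lB := sA_le_last hB.
have X r : r < size A + size B + size C -> xword (i + r) = nth true (A ++ B ++ C) r.
  move=> h; by rewrite Hi // !size_cat addnA.
have H := @xgap (i + ((size A) - (tA A).+1)) (i + ((size A) + sA B)) (i + ((size A) + ((size B) - (tA B).+1)))
   (i + ((size A) + (size B) + sA C)).
have : i + ((size A) + sA B) - (i + ((size A) - (tA A).+1)) <
   i + ((size A) + (size B) + sA C) - i - ((size A) + ((size B) - (tA B).+1)).
  have -> : i + ((size A) + (size B) + sA C) - i - ((size A) + ((size B) - (tA B).+1)) =
     i + ((size A) + (size B) + sA C) - (i + ((size A) + ((size B) - (tA B).+1)))  by lia.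
  apply: H; try lia.
  - rewrite X; last lia. rewrite nth_cat ifT; last lia. exact: tA_nth.
  - rewrite X; last lia. rewrite nth_cat ifF; last lia.
    rewrite nth_cat ifT; last lia. rewrite addKn. exact: sA_nth.
  - rewrite X; last lia. rewrite nth_cat ifF; last lia.
    rewrite nth_cat ifT; last lia. rewrite addKn. exact: tA_nth.
  - rewrite X; last lia. rewrite nth_cat ifF; last lia.
    rewrite nth_cat ifF; last lia.
    have -> : (size A) + (size B) + sA C - (size A) - (size B) = sA C by lia. exact: sA_nth.
  - move=> r hr. have hr' : i <= r by lia.
    rewrite -(subnKC hr') X; last lia. rewrite nth_cat.
    case: ifP => h1.
      apply: tA_after; lia.
    rewrite nth_cat ifT; last lia. apply: sA_before; lia.
  - move=> r hr. have hr' : i <= r by lia.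
    rewrite -(subnKC hr') X; last lia. rewrite nth_cat ifF; last lia.
    rewrite nth_cat; case: ifP => h1.
      apply: tA_after; lia.
    apply: sA_before; lia.
rewrite /gap; lia.
Qed.

Lemma enum1 : enum 'I_1 = [:: ord0].
Proof. by apply: (inj_map val_inj); rewrite val_enum_ord. Qed.

Lemma enum3 : enum 'I_3 = [:: inord 0; inord 1; inord 2].
Proof. by apply: (inj_map val_inj); rewrite val_enum_ord /= !inordK. Qed.

Lemma cover (f : nat -> nat) r : f 0 <= r -> (forall i, f i < f i.+1) ->
  exists i, f i <= r < f i.+1.
Proof.
move=> h0 hS.
have big : forall n, n <= f n.
  elim=> [|n IH] //. have := hS n. lia.
suff : forall n, r < f n -> exists i, f i <= r < f i.+1 by move=> H; apply: (H r.+1); have := big r.+1; lia.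
elim=> [|n IH] h; first lia.
case: (leqP (f n) r) => h'; first by exists n; rewrite h'.
exact: IH.
Qed.

Lemma subword_suffix m a l : subword (wsuffix xword m) a l = subword xword (m + a) l.
Proof. by apply: eq_map => k; rewrite /wsuffix addnA. Qed.

Theorem mainTheorem13 :
  forall m : nat, ~ exists V : nat -> seq bool,
    factorization (wsuffix xword m) V /\ ultra_mono phi V.
Proof.
move=> m [V [[Vpos Vdef] [c Hc]]].
pose pos i := \sum_(j < i) size (V j).
have posS i : pos i.+1 = pos i + size (V i) by rewrite /pos big_ord_recr.
have posM i j : i <= j -> pos i <= pos j.
  move=> /subnKC <-; elim: (j - i) => [|d IH]; first by rewrite addn0.
  by rewrite addnS posS; lia.
have Vfact i : inFact xword (V i).
  split; first exact: Vpos.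
  by exists (m + pos i); rewrite {1}Vdef subword_suffix.
have Hc0 : c = false.
  have := Hc 1 (fun _ => 0) 1%g erefl.
  rewrite enum1 /= cats0 => H.
  rewrite -H; last by move=> i j; rewrite (ord1 i) (ord1 j).
  rewrite /phi; case: excluded_middle_informative => // []; apply: Vfact.
subst c.
have zero N : exists i, N <= i /\ false \in V i.
  have zx : xword ((m + pos N) * ((m + pos N) + 3) %/ 2) = false.
    apply/x0; exists (m + pos N).
    rewrite divnK //; rewrite dvdn2 oddM [odd (_ + 3)]oddD /=; by case: (odd _).
  set p := (_ %/ 2) in zx.
  have hp : m + pos N <= p.
    rewrite /p leq_divRL //; nia.
  have hinc i : pos i < pos i.+1 by rewrite posS; have := Vpos i; lia.
  have h0 : pos 0 <= p - m by rewrite /pos big_ord0.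
  have [i hi] := @cover pos (p - m) h0 hinc.
  exists i; split.
      rewrite leqNgt; apply/negP => hiN.
      have := posM _ _ hiN; rewrite posS in hi *; lia.
    have hr : p - m - pos i < size (V i) by rewrite posS in hi; lia.
    apply/(nthP true); exists (p - m - pos i) => //.
    rewrite Vdef /subword (nth_map 0) ?size_iota // nth_iota // add0n /wsuffix.
    move: hi; rewrite posS => hi.
    by have -> : m + (pos i + (p - m - pos i)) = p by lia.
have [a [_ za]] := zero 0.
have [b [hb zb]] := zero a.+1.
have [d [hd zd]] := zero b.+1.
pose n : 'I_3 -> nat := fun i => nth 0 [:: a; b; d] i.
have ninc : forall i j : 'I_3, i < j -> n i < n j.
  move=> [i hi] [j hj]; rewrite /n /= => hij.
  case: i hi hij => [|[|[|i]]] hi //=; case: j hj => [|[|[|j]]] hj //= _; lia.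
pose s := perm (@ordS_inj 3).
have e1 : inFact xword (V a ++ V b ++ V d).
  apply: phi_false; have := Hc 3 n 1%g erefl ninc.
  rewrite enum3 /= !perm1 /n /= !inordK //= cats0 //.
have e2 : inFact xword (V b ++ V d ++ V a).
  apply: phi_false; have := Hc 3 n s erefl ninc.
  rewrite enum3 /= !permE /n /= !inordK //= cats0 //.
have e3 : inFact xword (V d ++ V a ++ V b).
  apply: phi_false; have := Hc 3 n (s * s)%g erefl ninc.
  rewrite enum3 /= !permM !permE /n /= !inordK //= cats0 //.
have := junction za zb zd e1.
have := junction zb zd za e2.
have := junction zd za zb e3.
lia.
Qed.
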